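(* Let $n>1$, $a\in\mathcal{T}_n$, and consider the semigroup $(\mathcal{T}_n,*_a)$. Let $x\in\mathcal{T}_n$. If $\operatorname{rank}(x)\le\operatorname{rank}(a)$, $|\operatorname{ran}(x)\cap M|\le1$ for every block $M$ of $\rho_a$, and $B\cap\operatorname{ran}(a)\ne\varnothing$ for every block $B$ of $\rho_x$, then $$H_x=\{y\in\mathcal{T}_n : \rho_y=\rho_x,\ \operatorname{ran}(y)=\operatorname{ran}(x),\ |\operatorname{ran}(y)\cap M|\le1 \ \forall \text{ blocks } M \text{ of } \rho_a,\ B\cap\operatorname{ran}(a)\ne\varnothing\ \forall \text{ blocks } B \text{ of } \rho_y\}.$$ Otherwise $H_x=\{x\}$.
   Context: $\mathcal{T}_n$ is the set of all maps $N\to N$, $N=\{1,\dots,n\}$. Maps are composed from left to right: $(xy)(i)=y(x(i))$. For fixed $a\in\mathcal{T}_n$, $x*_a y:=xay$; $(\mathcal{T}_n,*_a)$ is a semigroup. $\operatorname{ran}(x)$ is the image of $x$, $\operatorname{rank}(x)=|\operatorname{ran}(x)|$, and $\rho_x$ is the partition of $N$ into the nonempty fibres of $x$ ($i,j$ in the same block iff $x(i)=x(j)$). Green's relations in a semigroup $S$: with $S^1$ the semigroup $S$ with an identity adjoined, $x\mathcal{L}y$ iff $S^1x=S^1y$, $x\mathcal{R}y$ iff $xS^1=yS^1$, $\mathcal{H}=\mathcal{L}\cap\mathcal{R}$; $H_x$ denotes the $\mathcal{H}$-class of $x$ in $(\mathcal{T}_n,*_a)$. *)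

(* Defs.v *)
From mathcomp Require Import all_boot.
Set Implicit Arguments. Unset Strict Implicit. Unset Printing Implicit Defensive.

(* T_n : all maps N -> N with N = {0,..,n-1} (standing for {1,..,n}). *)
Definition Tn (n : nat) := {ffun 'I_n -> 'I_n}.

(* left-to-right composition: (comp x y) i = y (x i) *)
Definition comp n (x y : Tn n) : Tn n := [ffun i => y (x i)].

Definition sandwich n (a x y : Tn n) : Tn n := comp (comp x a) y.

Definition ran n (x : Tn n) : {set 'I_n} := [set x i | i in 'I_n].
Definition rank n (x : Tn n) : nat := #|ran x|.

Definition rho n (x : Tn n) : {set {set 'I_n}} :=
  [set x @^-1: [set j] | j in ran x].

(* Green's relations in (T_n, *_a) with identity adjoined *)
Definition in_left_ideal n (a x y : Tn n) : bool :=
  (x == y) || [exists s : Tn n, x == sandwich a s y].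
Definition in_right_ideal n (a x y : Tn n) : bool :=
  (x == y) || [exists s : Tn n, x == sandwich a y s].
Definition Lrel n (a x y : Tn n) : bool :=
  in_left_ideal a x y && in_left_ideal a y x.
Definition Rrel n (a x y : Tn n) : bool :=
  in_right_ideal a x y && in_right_ideal a y x.
Definition Hrel n (a x y : Tn n) : bool := Lrel a x y && Rrel a x y.

Definition Hclass n (a x : Tn n) : {set Tn n} := [set y | Hrel a x y].

Definition good n (a y : Tn n) : bool :=
  [forall M in rho a, #|ran y :&: M| <= 1] &&
  [forall B in rho y, B :&: ran a != set0].

(* Main.v *)
Require Import Defs.
From mathcomp Require Import all_boot.
Set Implicit Arguments. Unset Strict Implicit. Unset Printing Implicit Defensive.

Section S.
Variable n : nat.
Implicit Types a x y s : Tn n.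

Definition injon a y := forall i j : 'I_n, a (y i) = a (y j) -> y i = y j.
Definition surjon a y := forall i : 'I_n, exists k, y (a k) = y i.

Lemma sandE a x y i : sandwich a x y i = y (a (x i)).
Proof. by rewrite /sandwich /comp !ffunE. Qed.

Lemma inranP y j : reflect (exists i, j = y i) (j \in ran y).
Proof. by apply: (iffP imsetP) => [[i _ ->]|[i ->]]; exists i. Qed.

Lemma good1P a y :
  reflect (injon a y) [forall M in rho a, #|ran y :&: M| <= 1].
Proof.
apply: (iffP forall_inP) => [H i j E|H M].
  have Hm : a @^-1: [set a (y i)] \in rho a.
    by apply/imsetP; exists (a (y i)) => //; apply/inranP; exists (y i).
  move/card_le1_eqP: (H _ Hm); apply; rewrite !inE ?E ?eqxx;
  apply/andP; split => //; apply/inranP; eexists; reflexivity.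
case/imsetP => j _ ->; apply/card_le1_eqP => u v.
rewrite !inE => /andP[/inranP[i ->] /eqP Ei] /andP[/inranP[k ->] /eqP Ek].
by apply: H; rewrite Ei Ek.
Qed.

Lemma good2P a y :
  reflect (surjon a y) [forall B in rho y, B :&: ran a != set0].
Proof.
apply: (iffP forall_inP) => [H i|H B].
  have Hm : y @^-1: [set y i] \in rho y.
    by apply/imsetP; exists (y i) => //; apply/inranP; exists i.
  case/set0Pn: (H _ Hm) => m; rewrite !inE => /andP[/eqP Em /inranP[k Ek]].
  by exists k; rewrite -Ek.
case/imsetP => j /inranP[i ->] ->; case: (H i) => k Ek.
apply/set0Pn; exists (a k); rewrite !inE Ek eqxx /=; apply/inranP; by exists k.
Qed.

Lemma goodP a y : reflect (injon a y /\ surjon a y) (good a y).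
Proof. by apply: (iffP andP) => [[/good1P ? /good2P ?]|[/good1P ? /good2P ?]]. Qed.

Lemma rhoP x y : reflect (forall i j, (y i == y j) = (x i == x j)) (rho y == rho x).
Proof.
apply: (iffP eqP) => [E i j|H].
  have key : forall x y, rho y = rho x -> y i = y j -> x i = x j.
    move=> x' y' E' Eij.
    have : y' @^-1: [set y' i] \in rho x'.
      by rewrite -E'; apply/imsetP; exists (y' i) => //; apply/inranP; exists i.
    case/imsetP => m _ Em.
    have : i \in y' @^-1: [set y' i] by rewrite !inE.
    have : j \in y' @^-1: [set y' i] by rewrite !inE Eij.
    by rewrite Em !inE => /eqP -> /eqP ->.
  apply/eqP/eqP; [exact: key | exact: key].
apply/setP => B; apply/imsetP/imsetP => -[j /inranP[i ->] ->].
  exists (x i); first by apply/inranP; exists i.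
  by apply/setP => k; rewrite !inE H.
exists (y i); first by apply/inranP; exists i.
by apply/setP => k; rewrite !inE H.
Qed.

Lemma R2 a x y : injon a y -> (forall i j, y i = y j -> x i = x j) ->
  exists s, x = sandwich a y s.
Proof.
move=> Hi Hk.
exists [ffun k => if [pick i | a (y i) == k] is Some i then x i else k].
apply/ffunP => i; rewrite sandE ffunE.
case: pickP => [i' /eqP E|/(_ i)]; last by rewrite eqxx.
by apply: Hk; apply: Hi.
Qed.

Lemma L2 a x y : (forall i, exists k, x i = y (a k)) ->
  exists s, x = sandwich a s y.
Proof.
move=> H.
exists [ffun i => if [pick k | y (a k) == x i] is Some k then k else i].
apply/ffunP => i; rewrite sandE ffunE.
case: pickP => [k /eqP -> //|N]; case: (H i) => k Ek.
by move: (N k); rewrite Ek eqxx.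
Qed.

Lemma rank_le a x : injon a x -> rank x <= rank a.
Proof.
move=> H; rewrite /rank -(card_in_imset (f := a) (D := ran x)).
  apply: subset_leq_card; apply/subsetP => u /imsetP[v _ ->].
  by apply/inranP; exists v.
by move=> u v /inranP[i ->] /inranP[j ->]; apply: H.
Qed.

Lemma Hfwd a x y : Hrel a x y -> x <> y ->
  [/\ forall i j, (y i == y j) = (x i == x j), ran y = ran x,
      injon a x /\ surjon a x & injon a y /\ surjon a y].
Proof.
move=> + nxy.
have nxy' : (x == y) = false by apply/eqP.
have nyx' : (y == x) = false by apply/eqP; apply/nesym.
rewrite /Hrel /Lrel /Rrel /in_left_ideal /in_right_ideal nxy' nyx' /=.
case/andP => /andP[/existsP[s1 /eqP E1] /existsP[t1 /eqP F1]]
             /andP[/existsP[s2 /eqP E2] /existsP[t2 /eqP F2]].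
have e1 i : x i = y (a (s1 i)) by rewrite E1 sandE.
have f1 i : y i = x (a (t1 i)) by rewrite F1 sandE.
have e2 i : x i = s2 (a (y i)) by rewrite E2 sandE.
have f2 i : y i = t2 (a (x i)) by rewrite F2 sandE.
have kyx i j : y i = y j -> x i = x j by move=> E; rewrite !e2 E.
have kxy i j : x i = x j -> y i = y j by move=> E; rewrite !f2 E.
split.
- by move=> i j; apply/eqP/eqP; [apply: kyx | apply: kxy].
- apply/setP => u; apply/inranP/inranP => -[i ->].
    by exists (a (t1 i)); rewrite f1.
  by exists (a (s1 i)); rewrite e1.
- split; first by move=> i j E; apply: kyx; rewrite !f2 E.
  by move=> i; exists (t1 (a (s1 i))); rewrite -f1 -e1.
- split; first by move=> i j E; apply: kxy; rewrite !e2 E.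
  by move=> i; exists (s1 (a (t1 i))); rewrite -e1 -f1.
Qed.

Lemma Hbwd a x y : (forall i j, (y i == y j) = (x i == x j)) -> ran y = ran x ->
  injon a x /\ surjon a x -> injon a y /\ surjon a y -> Hrel a x y.
Proof.
move=> K R [ix sx] [iy sy].
have kyx i j : y i = y j -> x i = x j by move/eqP; rewrite K => /eqP.
have kxy i j : x i = x j -> y i = y j by move/eqP; rewrite -K => /eqP.
have lft : forall x y, ran y = ran x -> surjon a y ->
    exists s, x = sandwich a s y.
  move=> x' y' R' sy'; apply: L2 => i.
  have : x' i \in ran y' by rewrite R'; apply/inranP; exists i.
  case/inranP => j ->; case: (sy' j) => k Ek; by exists k.
rewrite /Hrel /Lrel /Rrel /in_left_ideal /in_right_ideal.
apply/andP; split; apply/andP; split; apply/orP; right; apply/existsP.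
- by case: (lft x y R sy) => s ->; exists s.
- by case: (lft y x (esym R) sx) => s ->; exists s.
- by case: (R2 iy kyx) => s ->; exists s.
- by case: (R2 ix kxy) => s ->; exists s.
Qed.

Lemma Hrefl a x : Hrel a x x.
Proof. by rewrite /Hrel /Lrel /Rrel /in_left_ideal /in_right_ideal eqxx. Qed.

End S.

Theorem theorem6 (n : nat) (hn : 1 < n) (a x : Tn n) :
  Hclass a x =
  if (rank x <= rank a) && good a x then
    [set y : Tn n | [&& rho y == rho x, ran y == ran x & good a y]]
  else [set x].
Proof.
apply/setP => y; rewrite /Hclass inE.
case: (boolP (good a x)) => gx.
  have := gx => /goodP[ix sx]; rewrite rank_le //= inE.
  case: (eqVneq x y) => [<-|nxy].
    by rewrite Hrefl !eqxx gx.
  apply/idP/idP.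
    move/Hfwd => /(_ (elimN eqP nxy)) [K R Gx Gy].
    by rewrite R eqxx /=; apply/andP; split; [apply/rhoP | apply/goodP].
  case/and3P => /rhoP K /eqP R /goodP Gy; exact: Hbwd.
rewrite andbF inE; case: (eqVneq y x) => [->|nyx]; first by rewrite Hrefl.
apply/negbTE/negP => /Hfwd H.
have [_ _ Gx _] := H (nesym (elimN eqP nyx)).
by move/goodP: Gx; rewrite (negbTE gx).
Qed.
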